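(* Let $f:X\to\mathcal G$ be convex and $x_0\in\operatorname{dom} f$. If $x_0$ solves the set-valued Minty inequality, i.e. for all $x\in X$ with $f(x)\ne f(x_0)$ one has $f'(x,x_0-x)\not\subseteq 0^+f(x)$, then it solves the scalarized Minty inequality, i.e. for all $x\in X$ with $f(x)\neq f(x_0)$ there exists $z^*\in C^-\setminus\{0\}$ with $\varphi_{f,z^*}(x)\ne-\infty$ and $\varphi'_{f,z^*}(x,x_0-x)<0$. If additionally the strong regularity condition $\varphi_{f'(x,\cdot),z^*}(u)=\varphi'_{f,z^*}(x,u)$ holds for all $z^*\in C^-\setminus\{0\}$ and all $x,u\in X$, then $x_0$ solves the set-valued Minty inequality if and only if it solves the scalarized one.
   Context: $X$ real linear space, $Z$ real locally convex Hausdorff space with dual $Z^*$, $C\subseteq Z$ closed convex cone, $0\in C$, $C^-=\{z^*:z^*(c)\le0\ \forall c\in C\}$, $C^-\setminus\{0\}\ne\emptyset$. $\mathcal G=\{A\subseteq Z:A=\operatorname{cl}\operatorname{co}(A+C)\}$; $A\oplus B=\operatorname{cl}\{a+b\}$, $tA=\{ta\}$ ($t>0$), $A\ominus B=\{z:B+\{z\}\subseteq A\}$; $0^+A=\{z:A+\{z\}\subseteq A\}$ for $A\ne\emptyset$, $0^+\emptyset=\emptyset$. $f$ convex: $f(tx_1+(1-t)x_2)\supseteq tf(x_1)\oplus(1-t)f(x_2)$; $\operatorname{dom}f=\{x:f(x)\ne\emptyset\}$. $f'(x,u)=\bigcap_{t_0>0}\operatorname{cl}\operatorname{co}\bigcup_{0<t<t_0}\frac1t(f(x+tu)\ominus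 f(x))$. On $\overline{\mathbb R}$: inf-addition $\dot+$ ($(-\infty)\dot+(+\infty)=+\infty$), $r\ominus s=\inf\{t\in\mathbb R:r\le s\dot+t\}$ ($\inf\emptyset=+\infty$). $\varphi_{f,z^*}(x)=\inf\{-z^*(z):z\in f(x)\}$ ($+\infty$ if $f(x)=\emptyset$), $\varphi_{f'(x,\cdot),z^*}(u)=\inf\{-z^*(z):z\in f'(x,u)\}$, $\varphi'_{f,z^*}(x,u)=\inf_{t>0}\frac1t(\varphi_{f,z^*}(x+tu)\ominus\varphi_{f,z^*}(x))$. *)

(* Defs.v *)
From HB Require Import structures.
From mathcomp Require Import all_boot all_order all_algebra.
From mathcomp Require Import all_classical all_reals all_analysis.
Set Implicit Arguments. Unset Strict Implicit. Unset Printing Implicit Defensive.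
Import Order.TTheory GRing.Theory Num.Theory.
Local Open Scope classical_set_scope.
Local Open Scope ring_scope.

Section Defs.
Context {R : realType}.

Definition cvx {M : lmodType R} (A : set M) :=
  forall a b (t : R), A a -> A b -> 0 <= t <= 1 -> A (t *: a + (1 - t) *: b).

Definition co {M : lmodType R} (A : set M) : set M :=
  \bigcap_(B in [set B : set M | A `<=` B /\ cvx B]) B.

Definition msum {M : lmodType R} (A B : set M) : set M :=
  [set z | exists a b, A a /\ B b /\ z = a + b].

Definition sscale {M : lmodType R} (t : R) (A : set M) : set M :=
  [set t *: a | a in A].

Definition sminus {M : lmodType R} (A B : set M) : set M :=
  [set z | forall b, B b -> A (b + z)].

(* recession cone 0^+A ; empty for A empty *)
Definition rec_cone {M : lmodType R} (A : set M) : set M :=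
  [set z | (exists a, A a) /\ forall a, A a -> A (a + z)].

Section TVS.
Context {Z : tvsType R}.

Definition soplus (A B : set Z) : set Z := closure (msum A B).

Definition closed_convex_cone (C : set Z) :=
  closed C /\ cvx C /\ C 0 /\ (forall (t : R) c, 0 <= t -> C c -> C (t *: c)).

Definition inG (C : set Z) (A : set Z) := A = closure (co (msum A C)).

Definition in_dual (zs : Z -> R) :=
  (forall (s : R) (a b : Z), zs (s *: a + b) = s * zs a + zs b) /\ continuous (zs : Z -> R^o).

Definition in_Cminus0 (C : set Z) (zs : Z -> R) :=
  in_dual zs /\ (forall c, C c -> zs c <= 0) /\ (exists z, zs z != 0).

Definition sv_convex {X : lmodType R} (f : X -> set Z) :=
  forall x1 x2 (t : R), 0 < t < 1 ->
    soplus (sscale t (f x1)) (sscale (1 - t) (f x2)) `<=` f (t *: x1 + (1 - t) *: x2).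

Definition sv_deriv {X : lmodType R} (f : X -> set Z) (x u : X) : set Z :=
  \bigcap_(t0 in [set t0 : R | 0 < t0])
    closure (co (\bigcup_(t in [set t : R | 0 < t < t0])
      sscale t^-1 (sminus (f (x + t *: u)) (f x)))).

(* inf { - z^*(z) : z in A }  (= +oo when A is empty) *)
Definition phiS (zs : Z -> R) (A : set Z) : \bar R :=
  ereal_inf [set (- zs z)%:E | z in A].

End TVS.

Local Open Scope ereal_scope.

(* inf-addition: (-oo) + (+oo) = +oo *)
Definition infadd (r s : \bar R) : \bar R :=
  match r, s with
  | +oo, _ => +oo
  | _, +oo => +oo
  | -oo, _ => -oo
  | _, -oo => -oo
  | a%:E, b%:E => (a + b)%R%:E
  end.

Definition eminus (r s : \bar R) : \bar R :=
  ereal_inf [set t%:E | t in [set t : R | r <= infadd s t%:E]].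

Definition phi_deriv {X : lmodType R} (phi : X -> \bar R) (x u : X) : \bar R :=
  ereal_inf [set (t^-1)%:E * eminus (phi (x + t *: u)%R) (phi x)
            | t in [set t : R | (0 < t)%R]].

Local Close Scope ereal_scope.

Section Minty.
Context {X : lmodType R} {Z : tvsType R}.
Variables (C : set Z) (f : X -> set Z) (x0 : X).

Definition set_Minty :=
  forall x, f x <> f x0 -> ~ (sv_deriv f x (x0 - x) `<=` rec_cone (f x)).

Definition scal_Minty :=
  forall x, f x <> f x0 -> exists zs : Z -> R,
    in_Cminus0 C zs /\ phiS zs (f x) <> -oo%E /\
    (phi_deriv (fun y => phiS zs (f y)) x (x0 - x) < 0)%E.

Definition strong_regularity :=
  forall zs : Z -> R, in_Cminus0 C zs -> forall x u : X,
    phiS zs (sv_deriv f x u) = phi_deriv (fun y => phiS zs (f y)) x u.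

End Minty.
End Defs.

(* Main.v *)
Require Import Defs.
From HB Require Import structures.
From mathcomp Require Import all_boot all_order all_algebra.
From mathcomp Require Import all_classical all_reals all_analysis.
From mathcomp Require Import unstable.
From mathcomp Require Import ring lra.
Set Implicit Arguments. Unset Strict Implicit. Unset Printing Implicit Defensive.
Import Order.TTheory GRing.Theory Num.Theory.
Import numFieldTopology.Exports numFieldNormedType.Exports.
Local Open Scope classical_set_scope.
Local Open Scope ring_scope.


Section S.
Context {R : realType} {Z : tvsType R}.

Lemma scal_nbhs (x : Z) (s0 : R) (U : set Z) : nbhs (s0 *: x) U ->
  exists2 e : R, 0 < e & forall s : R, `|s0 - s| < e -> U (s *: x).
Proof.
move=> hU; have /= := scale_continuous (s0, x) U.
move=> /(_ hU) [] /= [B1 B2] [/nbhs_ballP[e e0 he] B2x] BU.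
exists e => // s hs; apply: (BU (s, x)); split => //=.
  by apply: he.
exact: nbhs_singleton.
Qed.

Section Gauge.
Variables (D : set Z) (hDc : cvx D) (hD0 : D 0)
  (hDo : forall x, D x -> nbhs x D).

Definition gS (x : Z) := [set t : R | 0 < t /\ D (t^-1 *: x)].
Definition mu (x : Z) := inf (gS x).

Lemma gS_ne x : gS x !=set0.
Proof.
have := hDo hD0; rewrite -(scale0r x) => /scal_nbhs[e e0 he].
exists (2 / e); split; first by rewrite divr_gt0.
rewrite invf_div; apply: he; rewrite sub0r normrN ger0_norm ?divr_ge0 ?ltW//.
by rewrite ltr_pdivrMr// ltr_pMr// ltr1n.
Qed.

Lemma gS_lb x : has_lbound (gS x).
Proof. by exists 0 => t [t0 _]; exact: ltW. Qed.

Lemma mu_ge0 x : 0 <= mu x.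
Proof. by apply: lb_le_inf; [exact: gS_ne| move=> t [t0 _]; exact: ltW]. Qed.

Lemma mu_le x t : gS x t -> mu x <= t.
Proof. by move=> h; apply: (ge_inf (gS_lb x)). Qed.

Lemma gS_up x t t' : gS x t -> t <= t' -> gS x t'.
Proof.
move=> [t0 ht] tt'; have t'0 : 0 < t' by apply: lt_le_trans tt'.
split => //.
have := @hDc _ _ (t / t') ht hD0.
rewrite scaler0 addr0 scalerA mulrAC mulfV ?gt_eqF// mul1r.
apply; apply/andP; split; [by rewrite divr_ge0 // ltW | by rewrite ler_pdivrMr // mul1r].
Qed.

Lemma mu_lt x t : mu x < t -> gS x t.
Proof.
move=> /(inf_lt (gS_ne x))[t' h t't]; apply: gS_up h (ltW t't).
Qed.

Lemma muZ x s : 0 < s -> mu (s *: x) = s * mu x.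
Proof.
move=> s0.
have H (y : Z) (r : R) : 0 < r -> mu (r *: y) <= r * mu y.
  move=> r0; apply/ler_gtP => z hz.
  have hy : mu y < z / r by rewrite ltr_pdivlMr// mulrC.
  have [zr0 hzr] := mu_lt hy.
  rewrite -[z](mulfVK (lt0r_neq0 r0)) mulrC.
  apply: mu_le; split; first by rewrite mulr_gt0.
  by rewrite invfM scalerA mulrAC mulVf ?gt_eqF// mul1r.
apply/eqP; rewrite eq_le H//=.
rewrite -ler_pdivlMl//.
have := H (s *: x) s^-1; rewrite invr_gt0 scalerA mulVf ?gt_eqF// scale1r.
by move=> /(_ s0); rewrite mulrC.
Qed.

Lemma muD x y : mu (x + y) <= mu x + mu y.
Proof.
apply/ler_gtP => z hz.
pose e := z - (mu x + mu y).
have e0 : 0 < e by rewrite subr_gt0.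
have h1 : mu x < mu x + e / 2 by rewrite ltrDl divr_gt0.
have h2 : mu y < mu y + e / 2 by rewrite ltrDl divr_gt0.
have [t10 ht1] := mu_lt h1.
have [t20 ht2] := mu_lt h2.
set t1 := mu x + e / 2 in t10 ht1 *; set t2 := mu y + e / 2 in t20 ht2 *.
have -> : z = t1 + t2 by rewrite /t1 /t2 /e; field.
apply: mu_le; split; first by rewrite addr_gt0.
have := @hDc _ _ (t1 / (t1 + t2)) ht1 ht2.
have hne : t1 + t2 != 0 by rewrite gt_eqF// addr_gt0.
have -> : 1 - t1 / (t1 + t2) = t2 / (t1 + t2).
  by apply: (mulIf hne); rewrite mulrBl !mulfVK// mul1r; ring.
have t1n : t1 != 0 by rewrite gt_eqF.
have t2n : t2 != 0 by rewrite gt_eqF.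
have -> : t1 / (t1 + t2) *: (t1^-1 *: x) + t2 / (t1 + t2) *: (t2^-1 *: y) =
   (t1 + t2)^-1 *: (x + y).
  rewrite !scalerA scalerDr; congr (_ *: _ + _ *: _); field.
    by rewrite hne t1n.
  by rewrite hne t2n.
apply.
apply/andP; split; [by rewrite divr_ge0 // ltW // addr_gt0 | by rewrite (ler_pdivrMr _ _ (addr_gt0 t10 t20)) mul1r lerDl ltW].
Qed.
Lemma mu_lt1 x : D x -> mu x < 1.
Proof.
move=> Dx; have := hDo Dx; rewrite -{1}(scale1r x) => /scal_nbhs[e e0 he].
pose s := 1 + e / 2.
have s0 : 0 < s by rewrite addr_gt0// divr_gt0.
apply: (@le_lt_trans _ _ (s^-1)).
  apply: mu_le; split; first by rewrite invr_gt0.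
  rewrite invrK; apply: he.
  by rewrite /s opprD addrA subrr sub0r normrN ger0_norm ?divr_ge0 ?ltW// ltr_pdivrMr// ltr_pMr// ltr1n.
by rewrite invf_lt1// /s ltrDl divr_gt0.
Qed.

Lemma mu_ge1 q : ~ D q -> 1 <= mu q.
Proof.
move=> Dq; rewrite leNgt; apply/negP => /mu_lt [_]; by rewrite invr1 scale1r.
Qed.

End Gauge.
Lemma lc_nbhs (p : Z) (U : set Z) : nbhs p U ->
  exists b : set Z, [/\ open b, b p, b `<=` U & cvx b].
Proof.
move=> pU.
have [B Bc [Bo Bb]] := @locally_convex R Z.
have [V [BV Vp] VU] := Bb p U pU.
exists V; split => //; first exact: Bo.
move=> a c t aV cV /andP[t0 t1].
have := Bc V (mem_set BV) a c (Itv01 t0 t1) (mem_set aV) (mem_set cV).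
by rewrite inE.
Qed.
End S.
Section HBS.
Context {R : realType} {V : lmodType R}.
Variables (p : V -> R) (p0 : forall x, 0 <= p x)
  (pD : forall x y, p (x + y) <= p x + p y)
  (pZ : forall s x, 0 < s -> p (s *: x) = s * p x)
  (q : V) (hq : 1 <= p q).

Definition lgraph (G : set (V * R)) :=
  [/\ forall z r r', G (z, r) -> G (z, r') -> r = r',
      forall s z r z' r', G (z, r) -> G (z', r') -> G (s *: z + z', s * r + r'),
      forall z r, G (z, r) -> r <= p z & G (q, 1)].

Lemma lgraph0 G : lgraph G -> G (0, 0).
Proof.
move=> [_ hc _ hq1]; have := hc (-1) _ _ _ _ hq1 hq1.
by rewrite scaleN1r addNr mulN1r addNr.
Qed.

Lemma lgraphZ G s z r : lgraph G -> G (z, r) -> G (s *: z, s * r).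
Proof.
move=> hG h; have [_ hc _ _] := hG; have := hc s _ _ _ _ h (lgraph0 hG).
by rewrite addr0 addr0.
Qed.

Lemma p00 : p 0 = 0.
Proof. have h := pZ (0 : V) (ltr0Sn R 1); rewrite scaler0 in h; lra. Qed.

Lemma lgraph_ext G y : lgraph G -> ~ (exists r, G (y, r)) ->
  exists G', [/\ lgraph G', G `<=` G' & exists c, G' (y, c)].
Proof.
move=> hG hy; have [hf hc hd hq1] := hG; have G00 := lgraph0 hG.
pose E := [set zg.2 - p (zg.1 - y) | zg in G].
have key z g z' g' : G (z, g) -> G (z', g') -> g - p (z - y) <= p (z' + y) - g'.
  move=> h1 h2; have := hd _ _ (hc 1 _ _ _ _ h1 h2); rewrite scale1r mul1r => h.
  have := pD (z - y) (z' + y).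
  rewrite [z' + y]addrC addrA subrK => h'; lra.
have Ene : E !=set0 by exists (0 - p (0 - y)); exists (0, 0).
have Eub : ubound E (p (0 + y) - 0).
  by move=> _ [[z g] Gzg <-]; exact: key.
pose c := sup E.
have hc1 z g : G (z, g) -> g - p (z - y) <= c.
  move=> h; apply: (ub_le_sup (ex_intro _ _ Eub)); by exists (z, g).
have hc2 z' g' : G (z', g') -> c <= p (z' + y) - g'.
  move=> h; apply: ge_sup => // _ [[z g] Gzg <-]; exact: key.
pose G' := [set zr | exists z g t, G (z, g) /\ zr = (z + t *: y, g + t * c)].
exists G'; split; last 2 first.
- move=> [z g] h; exists z, g, 0; split => //.
  by rewrite scale0r addr0 mul0r addr0.
- exists c, 0, 0, 1; split => //.
  by rewrite scale1r add0r mul1r add0r.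
split.
- move=> w r r' [z [g [t [Gzg [-> ->]]]]] [z' [g' [t' [Gzg' [/= e ->]]]]].
  have [tt'|tt'] := eqVneq t t'.
    move: e; rewrite tt' => /addIr ez; move: Gzg; rewrite ez => Gzg.
    by rewrite (hf _ _ _ Gzg Gzg').
  exfalso; apply: hy.
  have Gd := hc (-1) _ _ _ _ Gzg Gzg'; rewrite scaleN1r mulN1r in Gd.
  have e2 : - z + z' = (t - t') *: y.
    rewrite scalerBl; apply: (addrI z); rewrite addrA subrr add0r.
    by rewrite addrA e -addrA subrr addr0.
  rewrite e2 in Gd.
  have := lgraphZ (t - t')^-1 hG Gd; rewrite scalerA mulVf ?scale1r ?subr_eq0//.
  by move=> h; eexists; exact: h.
- move=> s _ _ _ _ [z1 [g1 [t1 [G1 [-> ->]]]]] [z2 [g2 [t2 [G2 [-> ->]]]]].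
  exists (s *: z1 + z2), (s * g1 + g2), (s * t1 + t2); split; first exact: hc.
  congr (_, _); last by ring.
  by rewrite scalerDr scalerA scalerDl addrACA.
- move=> _ _ [z [g [t [Gzg [-> ->]]]]].
  have [t0|t0|->] := ltgtP t 0; last by rewrite scale0r mul0r !addr0; exact: hd.
  + have s0 : 0 < - t by rewrite oppr_gt0.
    have h := hc1 _ _ (lgraphZ (- t)^-1 hG Gzg).
    have := ler_wpM2l (ltW s0) h.
    rewrite mulrBr mulrA mulfV ?gt_eqF// mul1r.
    have -> : z + t *: y = (- t) *: ((- t)^-1 *: z - y).
      by rewrite scalerBr scalerA mulfV ?gt_eqF// scale1r scaleNr opprK.
    rewrite pZ//; lra.
  + have h := hc2 _ _ (lgraphZ t^-1 hG Gzg).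
    have := ler_wpM2l (ltW t0) h.
    rewrite mulrBr mulrA mulfV ?gt_eqF// mul1r.
    have -> : z + t *: y = t *: (t^-1 *: z + y).
      by rewrite scalerDr scalerA mulfV ?gt_eqF// scale1r.
    rewrite pZ//; lra.
- by exists q, 1, 0; split => //; rewrite scale0r mul0r !addr0.
Qed.


Lemma lgraph_base : lgraph [set zr | exists s, zr = (s *: q, s)].
Proof.
have q0 : q != 0 by apply/eqP => q0; move: hq; rewrite q0 p00; lra.
split.
- move=> z r r' [s [-> ->]] [s' [e ->]].
  apply/eqP; rewrite -subr_eq0; move: e => /eqP; rewrite -subr_eq0 -scalerBl.
  by rewrite scaler_eq0 (negbTE q0) orbF.
- move=> s _ _ _ _ [s1 [-> ->]] [s2 [-> ->]]; exists (s * s1 + s2).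
  by rewrite scalerDl scalerA.
- move=> _ _ [s [-> ->]].
  have [s0|s0] := ltP 0 s; last by apply: le_trans s0 (p0 _).
  by rewrite pZ// ler_peMr// ltW.
- by exists 1; rewrite scale1r.
Qed.

Theorem hahn_banach : exists F : V -> R,
  [/\ forall s a b, F (s *: a + b) = s * F a + F b, F q = 1 &
      forall x, F x <= p x].
Proof.
pose T := {G : set (V * R) | lgraph G}.
pose Rl := fun A B : T => `[< sval A `<=` sval B >].
have [M Mmax] : exists M : T, premaximal Rl M.
  apply: (@ZL_preorder T (exist _ _ lgraph_base) Rl).
  - by move=> t; apply/asboolP.
  - by move=> a b c /asboolP ab /asboolP bc; apply/asboolP => x /ab /bc.
  move=> A Atot; case: (pselect (A !=set0)) => [[G1 AG1]|An]; last first.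
    exists (exist _ _ lgraph_base) => s As; exfalso; apply: An; by exists s.
  pose U := \bigcup_(G in A) sval G.
  have hU : lgraph U.
    split.
    - move=> z r r' [G1' A1 h1] [G2' A2 h2].
      have [/asboolP s12|/asboolP s21] := Atot _ _ A1 A2.
        by have [hf _ _ _] := svalP G2'; exact: hf (s12 (z, r) h1) h2.
      by have [hf _ _ _] := svalP G1'; exact: hf h1 (s21 (z, r') h2).
    - move=> s z r z' r' [G1' A1 h1] [G2' A2 h2].
      have [/asboolP s12|/asboolP s21] := Atot _ _ A1 A2.
        exists G2' => //; have [_ hc _ _] := svalP G2'; exact: hc (s12 (z, r) h1) h2.
      exists G1' => //; have [_ hc _ _] := svalP G1'; exact: hc h1 (s21 (z', r') h2).
    - move=> z r [G' _ h]; have [_ _ hd _] := svalP G'; exact: hd.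
    - by exists G1 => //; have [_ _ _ hq1] := svalP G1.
  exists (exist _ U hU) => s As; apply/asboolP => x h; by exists s.
have [hf hc hd hq1] := svalP M.
have tot y : exists r, sval M (y, r).
  apply/not_existsP => hy.
  have [G' [hG' sub [c hc']]] := lgraph_ext (svalP M) (fun e => let: ex_intro r h := e in hy r h).
  have /asboolP := Mmax (exist _ G' hG') (asboolT sub).
  by move=> /(_ _ hc') /= h; exact: hy c h.
pose F x := xget 0 [set r | sval M (x, r)].
have hF x : sval M (x, F x) := @xgetPex R 0 [set r | sval M (x, r)] (tot x).
exists F; split.
- move=> s a b; apply: hf (hF _) _; exact: hc (hF a) (hF b).
- exact: hf (hF q) hq1.
- move=> x; exact: hd (hF x).
Qed.

End HBS.

Section Sep.
Context {R : realType} {Z : tvsType R}.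

Lemma dual_add (F : Z -> R) : in_dual F -> forall a b, F (a + b) = F a + F b.
Proof. by move=> [hl _] a b; rewrite -[a in LHS]scale1r hl mul1r. Qed.

Lemma dual_0 (F : Z -> R) : in_dual F -> F 0 = 0.
Proof. by move=> hF; have := dual_add hF 0 0; rewrite addr0 => h; lra. Qed.

Lemma dual_Z (F : Z -> R) : in_dual F -> forall s a, F (s *: a) = s * F a.
Proof. by move=> hF s a; have [hl _] := hF; rewrite -[_ *: a]addr0 hl dual_0 ?addr0. Qed.

Lemma dual_N (F : Z -> R) : in_dual F -> forall a, F (- a) = - F a.
Proof. by move=> hF a; rewrite -scaleN1r dual_Z // mulN1r. Qed.

Lemma dual_B (F : Z -> R) : in_dual F -> forall a b, F (a - b) = F a - F b.
Proof. by move=> hF a b; rewrite dual_add // dual_N. Qed.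

Lemma sep_open (D : set Z) (q : Z) : cvx D -> D 0 ->
  (forall x, D x -> nbhs x D) -> ~ D q ->
  exists F : Z -> R, [/\ in_dual F, F q = 1 & forall x, D x -> F x < 1].
Proof.
move=> hDc hD0 hDo hq.
have [F [hl hFq hFp]] := @hahn_banach R Z (mu D) (mu_ge0 hD0 hDo)
  (muD hDc hD0 hDo) (fun s x s0 => muZ hDc hD0 hDo x s0) q (mu_ge1 hDc hD0 hDo hq).
have hlt x : D x -> F x < 1 by move=> Dx; apply: le_lt_trans (hFp x) (mu_lt1 hDo Dx).
have hd : in_dual F.
  split => //.
  have F0 : F 0 = 0.
    by have := hl 1 0 0; rewrite scale1r addr0 mul1r => h; lra.
  have Fadd a b : F (a + b) = F a + F b by rewrite -[a in LHS]scale1r hl mul1r.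
  have FZ s a : F (s *: a) = s * F a by rewrite -[_ *: a]addr0 hl F0 addr0.
  have FN a : F (- a) = - F a by rewrite -scaleN1r FZ mulN1r.
  pose N := D `&` [set z | D (- z)].
  have N0 : nbhs 0 N.
    apply: filterI; first exact: hDo 0 hD0.
    have := nbhs0N (hDo 0 hD0); apply: filterS => z [w Dw <-] /=; by rewrite opprK.
  have Nb z : N z -> `|F z| < 1.
    move=> [Dz Dnz]; rewrite ltr_norml hlt // andbT ltrNl -FN; exact: hlt.
  move=> x; apply/cvgrPdist_lt => e e0.
  have := nbhsT x (nbhs0Z (lt0r_neq0 e0) N0).
  apply: filterS => _ [_ [n Nn <-] <-] /=.
  rewrite Fadd FZ opprD addrA subrr sub0r normrN normrM gtr0_norm //.
  by rewrite gtr_pMr // Nb.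
by exists F; split.
Qed.

Lemma comb3 (a1 a2 b1 b2 w : Z) (t : R) :
  t *: (a1 - b1 + w) + (1 - t) *: (a2 - b2 + w) =
  (t *: a1 + (1 - t) *: a2) - (t *: b1 + (1 - t) *: b2) + w.
Proof.
rewrite !scalerDr !scalerN addrACA [X in _ + X = _](_ : _ = w); last first.
  by rewrite -scalerDl subrKC scale1r.
congr (_ + _); rewrite addrACA opprD //.
Qed.

Lemma sep (K b : set Z) (k0 p : Z) : cvx K -> K k0 -> open b -> b p -> cvx b ->
  (forall k, K k -> ~ b k) ->
  exists F : Z -> R, in_dual F /\ forall k, K k -> F k < F p.
Proof.
move=> hK Kk0 bo bp hb Kb.
pose D := [set d | exists k v, [/\ K k, b v & d = k - v + (p - k0)]].
have hDc : cvx D.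
  move=> _ _ t [k1 [v1 [K1 b1 ->]]] [k2 [v2 [K2 b2 ->]]] ht.
  exists (t *: k1 + (1 - t) *: k2), (t *: v1 + (1 - t) *: v2); split.
  - exact: hK.
  - exact: hb.
  - exact: comb3.
have hD0 : D 0.
  by exists k0, p; split => //; rewrite addrA subrK subrr.
have hDo x : D x -> nbhs x D.
  move=> [k [v [Kk bv ->]]].
  have nv : nbhs v b by apply: open_nbhs_nbhs; split.
  have := opp_continuous (- v) b; rewrite opprK => /(_ nv) nv'.
  have := nbhsB (k + (p - k0)) nv'.
  rewrite [k + _ + - v]addrAC.
  apply: filterS => _ [y /= by' <-].
  exists k, (- y); split => //.
  by rewrite opprK addrAC.
have hq : ~ D (p - k0).
  move=> [k [v [Kk bv e]]].
  have kv : k = v.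
    apply/eqP; rewrite -subr_eq0; apply/eqP; apply: (addIr (p - k0)).
    by rewrite add0r -e.
  by apply: (Kb k Kk); rewrite kv.
have [F [hd hFq hF]] := sep_open hDc hD0 hDo hq.
exists F; split => // k Kk.
have : D (k - p + (p - k0)) by exists k, p.
move=> /hF; rewrite addrA subrK !(dual_B hd).
rewrite (dual_B hd) in hFq; lra.
Qed.

End Sep.

Section Co.
Context {R : realType} {M : lmodType R}.

Lemma co_sub (A B : set M) : A `<=` B -> cvx B -> co A `<=` B.
Proof. by move=> AB cB z hz; exact: (hz B). Qed.

Lemma sub_co (A : set M) : A `<=` co A.
Proof. by move=> z Az B [AB _]; exact: AB. Qed.

Lemma cvx_co (A : set M) : cvx (co A).
Proof.
move=> a b t ha hb ht B [AB cB].
exact: (cB a b t (ha B (conj AB cB)) (hb B (conj AB cB)) ht).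
Qed.
End Co.

Section Main.
Context {R : realType} {X : lmodType R} {Z : tvsType R}.

Lemma part1 (C : set Z) (hC : closed_convex_cone C)
  (hCm : exists zs : Z -> R, in_Cminus0 C zs)
  (f : X -> set Z) (hfG : forall x, inG C (f x)) (x0 : X) :
  set_Minty f x0 -> scal_Minty C f x0.
Proof.
move=> hsm x hx; have hsmx := hsm x hx; set u := x0 - x in hsmx *.
case: (pselect (f x !=set0)) => [[a fxa]|fx0]; last first.
  have fxE : f x = set0 by apply/seteqP; split => // z fz; apply: fx0; exists z.
  have [zs hzs] := hCm; exists zs; split => //.
  have phE : phiS zs (f x) = +oo%E by rewrite /phiS fxE image_set0 ereal_inf0.
  split; first by rewrite phE.
  apply: (@le_lt_trans _ _ -oo%E) => //.
  apply: ge_ereal_inf.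
  exists ((1^-1)%:E * eminus (phiS zs (f (x + 1 *: u)%R)) (phiS zs (f x)))%E.
    by exists 1; [rewrite /= ltr01 | by []].
  rewrite phE.
  have -> : eminus (phiS zs (f (x + 1 *: u)%R)) +oo%E = -oo%E.
    rewrite /eminus.
    have -> : [set t : R | (phiS zs (f (x + 1 *: u)%R) <= infadd +oo%E t%:E)%E] = setT.
      by apply/seteqP; split => // t _; rewrite /= leey.
    exact: ereal_inf_real.
  by rewrite invr1 mul1e.
have [z [hz hnz]] : exists z, sv_deriv f x u z /\ ~ rec_cone (f x) z.
  apply: contrapT => hn; apply: hsmx => z hz; apply: contrapT => hnz; apply: hn.
  by exists z.
have [a' [fa' hna']] : exists a', f x a' /\ ~ f x (a' + z).
  apply: contrapT => hn; apply: hnz; split; first by exists a.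
  move=> b fb; apply: contrapT => hb; apply: hn; by exists b.
have [Ccl [Ccvx [C0 Ccone]]] := hC.
pose K := co (Defs.msum (f x) C).
have msK w c : f x w -> C c -> K (w + c).
  by move=> fw Cc; apply: sub_co; exists w, c.
have fxK w : f x w -> K w by move=> fw; rewrite -[w]addr0; exact: msK.
have ncl : ~ closure K (a' + z) by move=> h; apply: hna'; rewrite (hfG x).
have [B nB KB] : exists2 B, nbhs (a' + z) B & forall k, K k -> ~ B k.
  apply: contrapT => hn; apply: ncl => B nB; apply: contrapT => hne; apply: hn.
  by exists B => // k Kk Bk; apply: hne; exists k.
have [b [bo bp bB bc]] := lc_nbhs nB.
have [zs [hd hzs]] := sep (@cvx_co _ _ _) (fxK _ fa') bo bp bc
  (fun k Kk bk => KB k Kk (bB k bk)).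
have zs_z : 0 < zs z.
  by have := hzs a' (fxK _ fa'); rewrite (dual_add hd); lra.
have hCm0 c : C c -> zs c <= 0.
  move=> Cc; rewrite leNgt; apply/negP => c0.
  pose t := zs z / zs c.
  have t0 : 0 <= t by rewrite divr_ge0 ?ltW.
  have := hzs _ (msK _ _ fa' (Ccone t c t0 Cc)).
  by rewrite !(dual_add hd) (dual_Z hd) /t mulfVK ?gt_eqF// ltxx.
exists zs; split.
  split; [exact: hd | split; [exact: hCm0 | exists z; by rewrite gt_eqF]].
have phlb : ((- zs (a' + z))%:E <= phiS zs (f x))%E.
  apply: le_ereal_inf_tmp => _ [w fw <-]; rewrite lee_fin lerN2.
  exact: ltW (hzs w (fxK w fw)).
have phub : (phiS zs (f x) <= (- zs a')%:E)%E.
  by apply: ereal_inf_lbound; exists a'.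
have [r phr] : exists r, phiS zs (f x) = r%:E.
  by move: phlb phub; case: (phiS zs (f x)) => [r _ _| |] //; exists r.
split; first by rewrite phr.
rewrite ltNge; apply/negP => hph.
pose H := [set w : Z | zs w <= 0].
have Hcl : closed H.
  have -> : H = zs @^-1` [set r : R | r <= 0] by [].
  apply: (@preimage_closed Z R zs [set r : R | r <= 0]); last exact: closed_le.
  by move=> w _; have [_ hc] := hd; exact: hc.
have Hcvx : cvx H.
  move=> w1 w2 t h1 h2 /andP[t0 t1]; rewrite /H /= (dual_add hd) !(dual_Z hd).
  rewrite /H /= in h1 h2.
  have : 0 <= 1 - t by lra.
  nra.
have U1H : \bigcup_(t in [set t : R | 0 < t < 1])
    sscale t^-1 (sminus (f (x + t *: u)) (f x)) `<=` H.
  move=> _ [t /andP[t0 t1] [s hs <-]].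
  rewrite /H /= (dual_Z hd).
  set Y := phiS zs (f (x + t *: u)).
  have hb w : f x w -> (Y <= (- zs w - zs s)%:E)%E.
    move=> fw; apply: ereal_inf_lbound; exists (w + s); first exact: hs.
    by rewrite (dual_add hd) opprD.
  have hY : (Y <= (r - zs s)%:E)%E.
    move: hb; case: Y => [y| |] hb; last by rewrite leNye.
      have : ((y + zs s)%:E <= phiS zs (f x))%E.
        apply: le_ereal_inf_tmp => _ [w fw <-].
        have := hb w fw; rewrite !lee_fin; lra.
      rewrite phr !lee_fin; lra.
    by have := hb a fxa.
  have hE : (eminus Y r%:E <= (- zs s)%:E)%E.
    by apply: ereal_inf_lbound; exists (- zs s).
  have hT : (phi_deriv (fun y => phiS zs (f y)) x u <=
             (t^-1)%:E * eminus Y r%:E)%E.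
    by apply: ereal_inf_lbound; exists t => //=; rewrite phr.
  have : (0 <= (t^-1)%:E * (- zs s)%:E)%E.
    apply: (le_trans hph); apply: (le_trans hT); apply: lee_wpmul2l => //.
    by rewrite lee_fin invr_ge0 ltW.
  rewrite -EFinM lee_fin mulrN; lra.
have : sv_deriv f x u `<=` H.
  move=> w hw; have := hw 1 ltr01.
  have [h _] := closure_id H; rewrite (h Hcl).
  apply: closureS; exact: co_sub U1H Hcvx.
by move=> /(_ z hz); rewrite /H /= leNgt zs_z.
Qed.

Lemma part2 (C : set Z) (f : X -> set Z) (x0 : X) :
  strong_regularity C f -> scal_Minty C f x0 -> set_Minty f x0.
Proof.
move=> hsr hsc x hx hsub; have [zs [hzs [hph hlt]]] := hsc x hx.
have hd : in_dual zs by case: hzs.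
rewrite -(hsr zs hzs x (x0 - x)) in hlt.
have [_ [z hz <-] hz0] := ereal_inf_lt hlt.
move: hz0; rewrite lte_fin oppr_lt0 => zsz.
have [[a fa] hrec] := hsub z hz.
have hn (n : nat) : f x (a + n%:R *: z).
  elim: n => [|n IH]; first by rewrite scale0r addr0.
  by rewrite -addn1 natrD scalerDl scale1r addrA; exact: hrec.
have phub : (phiS zs (f x) <= (- zs a)%:E)%E.
  by apply: ereal_inf_lbound; exists a.
have [r phr] : exists r, phiS zs (f x) = r%:E.
  move: hph phub; case: (phiS zs (f x)) => [r _ _|_ h|h _].
  - by exists r.
  - by move: h; rewrite leNgt ltey.
  - by [].
pose Mb := `|(- zs a - r) / zs z|.
pose n := Num.Def.archi_bound Mb.
have hMn : Mb < n%:R by apply: archi_boundP; exact: normr_ge0.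
have h1 : (phiS zs (f x) <= (- zs (a + n%:R *: z))%:E)%E.
  by apply: ereal_inf_lbound; exists (a + n%:R *: z).
rewrite phr lee_fin (dual_add hd) (dual_Z hd) in h1.
have h2 : Mb * zs z < n%:R * zs z by rewrite ltr_pM2r.
have h3 : (- zs a - r) <= Mb * zs z.
  by rewrite -ler_pdivrMr // /Mb ler_norm.
move: h1 h2 h3; set N := n%:R * zs z; set P := Mb * zs z; set A := zs a.
move=> h1 h2 h3; clear -h1 h2 h3; lra.
Qed.

End Main.

Theorem mainTheorem13 (R : realType) (X : lmodType R) (Z : tvsType R)
  (hZ : hausdorff_space Z)
  (C : set Z) (hC : closed_convex_cone C)
  (hCm : exists zs : Z -> R, in_Cminus0 C zs)
  (f : X -> set Z) (hfG : forall x, inG C (f x)) (hfc : sv_convex f)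
  (x0 : X) (hx0 : f x0 !=set0) :
  (set_Minty f x0 -> scal_Minty C f x0) /\
  (strong_regularity C f -> (set_Minty f x0 <-> scal_Minty C f x0)).
Proof.
split; first exact: part1.
move=> hsr; split; first exact: part1.
exact: part2.
Qed.
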